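(* The variety $\mathfrak B$ of all bicommutative algebras is generated by its free algebra of rank one, $F_1(\mathfrak B)$; that is, every polynomial identity satisfied by $F_1(\mathfrak B)$ holds in all bicommutative algebras.
   Context: $K$ is a field of characteristic $0$. A bicommutative algebra is a (nonassociative) $K$-algebra satisfying $(x_1x_2)x_3=(x_1x_3)x_2$ and $x_1(x_2x_3)=x_2(x_1x_3)$; $\mathfrak B$ is the variety of such algebras and $F_1(\mathfrak B)$ its relatively free algebra on one generator. *)

(* Defs.v *)
From HB Require Import structures.
From mathcomp Require Import all_boot all_order all_algebra.
Set Implicit Arguments. Unset Strict Implicit. Unset Printing Implicit Defensive.
Import GRing.Theory.
Local Open Scope ring_scope.

(* Nonassociative polynomials (without constant term) over K in the
   countably many variables x_0, x_1, ...: formal expressions built from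
   variables, 0, +, scalar multiplication and the (nonassociative) product. *)
Inductive naterm (K : Type) : Type :=
  | NVar of nat
  | NZero
  | NAdd of naterm K & naterm K
  | NScale of K & naterm K
  | NMul of naterm K & naterm K.

Arguments NVar {K}.
Arguments NZero {K}.

Section Eval.
Variables (K : fieldType) (V : lmodType K) (mul : V -> V -> V).

Fixpoint naeval (e : nat -> V) (t : naterm K) : V :=
  match t with
  | NVar i => e i
  | NZero => 0
  | NAdd t1 t2 => naeval e t1 + naeval e t2
  | NScale c t1 => c *: naeval e t1
  | NMul t1 t2 => mul (naeval e t1) (naeval e t2)
  end.

Definition is_bicommutative_algebra : Prop :=
  [/\ forall (a : K) (x y z : V), mul (a *: x + y) z = a *: mul x z + mul y z,
      forall (a : K) (x y z : V), mul x (a *: y + z) = a *: mul x y + mul x z,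
      forall x1 x2 x3 : V, mul (mul x1 x2) x3 = mul (mul x1 x3) x2
    & forall x1 x2 x3 : V, mul x1 (mul x2 x3) = mul x2 (mul x1 x3)].

Definition is_identity_of (f : naterm K) : Prop :=
  forall e : nat -> V, naeval e f = 0.
End Eval.

Definition identity_of_B (K : fieldType) (f : naterm K) : Prop :=
  forall (V : lmodType K) (mul : V -> V -> V),
    is_bicommutative_algebra mul -> is_identity_of mul f.

Fixpoint nasubst (K : Type) (g : nat -> naterm K) (t : naterm K) : naterm K :=
  match t with
  | NVar i => g i
  | NZero => NZero
  | NAdd t1 t2 => NAdd (nasubst g t1) (nasubst g t2)
  | NScale c t1 => NScale c (nasubst g t1)
  | NMul t1 t2 => NMul (nasubst g t1) (nasubst g t2)
  end.

(* The relatively free algebra F_1(B) = K{x} / (T(B) ∩ K{x}): its elements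
   are classes of polynomials in the single variable x = x_0. *)
Definition F1B_elem (K : Type) := naterm K.
Definition is_one_var (K : Type) (t : naterm K) : Prop :=
  nasubst (fun _ => NVar 0) t = t.
Definition F1B_zero (K : fieldType) (t : F1B_elem K) : Prop := identity_of_B t.

(* f is an identity of F_1(B): for all elements [g_i] of F_1(B)
   (g_i one-variable polynomials), f([g_0], [g_1], ...) = [f(g_0, g_1, ...)]
   is zero in F_1(B). *)
Definition identity_of_F1B (K : fieldType) (f : naterm K) : Prop :=
  forall g : nat -> F1B_elem K,
    (forall i, is_one_var (g i)) -> F1B_zero (nasubst g f).

(* Main.v *)
Require Import Defs.
From HB Require Import structures.
From mathcomp Require Import all_boot all_order all_algebra.
From mathcomp Require Import mpoly.
From mathcomp Require Import zify ring.
Set Implicit Arguments. Unset Strict Implicit. Unset Printing Implicit Defensive.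
Import GRing.Theory.
Local Open Scope ring_scope.
Local Notation widen := (widen_ord (leqnSn _)).
Section Van.
Variable K : fieldType.
Hypothesis hK : [pchar K] =i pred0.

Lemma natK_inj : injective (fun n : nat => n%:R : K).
Proof.
have h := (pcharf0P K).1 hK.
move=> m n /= E.
wlog le: m n E / (m <= n)%N.
  move=> W; case: (leqP m n) => [|/ltnW] H; first exact: W.
  by symmetry; apply: W.
have: ((n - m)%:R : K) == 0 by rewrite natrB // E subrr.
by rewrite h subn_eq0 => H; apply/eqP; rewrite eqn_leq le H.
Qed.

Lemma poly_vanish (p : {poly K}) : (forall x, p.[x] = 0) -> p = 0.
Proof.
move=> H; apply: (@roots_geq_poly_eq0 _ _ [seq i%:R | i <- iota 0 (size p)]).
- by apply/allP => x _; apply/rootP.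
- rewrite map_inj_uniq ?iota_uniq //; exact: natK_inj.
- by rewrite size_map size_iota.
Qed.

Lemma mpoly_morph_eq (N : nat) (S : comNzRingType) (f g : {mpoly K[N]} -> S) :
  {morph f : x y / x + y} -> f 0 = 0 -> {morph f : x y / x * y} -> f 1 = 1 ->
  {morph g : x y / x + y} -> g 0 = 0 -> {morph g : x y / x * y} -> g 1 = 1 ->
  (forall c, f c%:MP = g c%:MP) -> (forall i, f 'X_i = g 'X_i) ->
  forall p, f p = g p.
Proof.
move=> fD f0 fM f1 gD g0 gM g1 HC HX p.
rewrite [p]mpolyE (big_morph f fD f0) (big_morph g gD g0).
apply: eq_bigr => m _.
rewrite -mul_mpolyC fM gM HC; congr (_ * _).
rewrite mpolyXE_id (big_morph f fM f1) (big_morph g gM g1).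
apply: eq_bigr => i _.
elim: (m i) => [|k IH]; first by rewrite !expr0 f1 g1.
by rewrite !exprS fM gM IH HX.
Qed.
Lemma muniX (N : nat) (i : 'I_N.+1) : muni ('X_i : {mpoly K[N.+1]}) =
  match split (cast_ord (esym (addn1 N)) i) with
  | inl j => ('X_j)%:P
  | inr _ => 'X
  end.
Proof. by rewrite /muni mmapX mmap1U. Qed.

Lemma meval_muni (N : nat) (v : 'I_N.+1 -> K) (p : {mpoly K[N.+1]}) :
  p.@[v] = (map_poly (meval (fun i => v (widen i))) (muni p)).[v ord_max].
Proof.
apply: (@mpoly_morph_eq N.+1 K (meval v)
  (fun p => (map_poly (meval (fun i => v (widen i))) (muni p)).[v ord_max])).
- exact: mevalD.
- exact: meval0.
- exact: mevalM.
- exact: meval1.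
- by move=> x y /=; rewrite muniD rmorphD hornerD.
- by rewrite muni0 rmorph0 horner0.
- by move=> x y /=; rewrite muniM rmorphM hornerM.
- by rewrite muni1 rmorph1 hornerC.
- by move=> c /=; rewrite muniC map_polyC hornerC mevalC; symmetry; apply: mevalC.
- move=> i; rewrite mevalXU /= muniX; case: splitP => j Hj.
    rewrite map_polyC hornerC; transitivity (meval (fun i0 : 'I_N => v (widen i0)) 'X_j); last by []. rewrite mevalXU; congr (v _); apply/val_inj.
    by move: Hj => /= <-.
  rewrite map_polyX hornerX; congr (v _); apply/val_inj => /=.
  move: Hj; rewrite /= => ->; by rewrite (ord1 j) addn0.
Qed.

Lemma muni_inj (N : nat) (p : {mpoly K[N.+1]}) : muni p = 0 -> p = 0.
Proof.
have E : forall q : {mpoly K[N.+1]}, q = (map_poly (@mwiden _ _) (muni q)).['X_ord_max].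
  apply: (@mpoly_morph_eq N.+1 _ id (fun q => (map_poly (@mwiden _ _) (muni q)).['X_ord_max])).
  - by []. - by []. - by []. - by [].
  - by move=> x y /=; rewrite muniD rmorphD hornerD.
  - by rewrite muni0 rmorph0 horner0.
  - by move=> x y /=; rewrite muniM rmorphM hornerM.
  - by rewrite muni1 rmorph1 hornerC.
  - by move=> c /=; rewrite muniC map_polyC hornerC; symmetry; apply: mwidenC.
  - move=> i /=; rewrite muniX; case: splitP => j Hj.
      rewrite map_polyC hornerC; transitivity (mwiden ('X_j : {mpoly K[N]})); last by []. rewrite mwidenX mnmwiden1; congr 'X__; apply/val_inj.
      by move: Hj => /= <-.
    rewrite map_polyX hornerX; congr 'X__; apply/val_inj => /=.
    move: Hj; rewrite /= => ->; by rewrite (ord1 j) addn0.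
by move=> H; rewrite [p]E H rmorph0 horner0.
Qed.

Lemma mpoly_vanish (N : nat) (p : {mpoly K[N]}) :
  (forall v, p.@[v] = 0) -> p = 0.
Proof.
elim: N p => [|N IH] p H.
  have Hp : p = (p@_0%MM)%:MP.
    apply/mpolyP => m; rewrite mcoeffC.
    have -> : m = 0%MM by apply/mnmP => -[].
    by rewrite eqxx mulr1.
  have := H (fun i => 0); rewrite Hp mevalC => ->; by rewrite mpolyC0.
apply: muni_inj; apply/polyP => k; rewrite coef0.
apply: IH => w.
have P0 : map_poly (meval w) (muni p) = 0.
  apply: poly_vanish => x.
  pose v' := fun i : 'I_N.+1 => match split (cast_ord (esym (addn1 N)) i) with
                                 | inl j => w j | inr _ => x end.
  have := H v'; rewrite meval_muni.
  have -> : v' ord_max = x.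
    rewrite /v'; case: splitP => j Hj //.
    by move: (ltn_ord j); rewrite -Hj /= ltnn.
  have -> : map_poly (meval (fun i => v' (widen i))) (muni p) = map_poly (meval w) (muni p).
    apply: eq_map_poly => q; apply: meval_eq => i.
    rewrite /v'; case: splitP => j Hj.
      by congr (w _); apply/val_inj; move: Hj => /= ->.
    by have E : (i : nat) = (N + j)%N := Hj; have := ltn_ord i; rewrite E ltnNge leq_addr.
  by [].
by move/(congr1 (fun q : {poly K} => q`_k)): P0; rewrite coef_map coef0.
Qed.
End Van.

Section Alg.
Variables (K : fieldType) (V : lmodType K) (mul : V -> V -> V).
Hypothesis Hb : [/\ forall (a : K) (x y z : V), mul (a *: x + y) z = a *: mul x z + mul y z,
      forall (a : K) (x y z : V), mul x (a *: y + z) = a *: mul x y + mul x z,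
      forall x1 x2 x3 : V, mul (mul x1 x2) x3 = mul (mul x1 x3) x2
    & forall x1 x2 x3 : V, mul x1 (mul x2 x3) = mul x2 (mul x1 x3)].

Lemma rc x y z : mul (mul x y) z = mul (mul x z) y. Proof. by case: Hb. Qed.
Lemma lc x y z : mul x (mul y z) = mul y (mul x z). Proof. by case: Hb. Qed.
Lemma bmulDl x y z : mul (x + y) z = mul x z + mul y z.
Proof. by case: Hb => H _ _ _; have := H 1 x y z; rewrite !scale1r. Qed.
Lemma bmulDr x y z : mul z (x + y) = mul z x + mul z y.
Proof. by case: Hb => _ H _ _; have := H 1 z x y; rewrite !scale1r. Qed.
Lemma bmul0l z : mul 0 z = 0.
Proof. by apply: (addrI (mul 0 z)); rewrite addr0 -bmulDl addr0. Qed.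
Lemma bmul0r z : mul z 0 = 0.
Proof. by apply: (addrI (mul z 0)); rewrite addr0 -bmulDr addr0. Qed.
Lemma bmulZl a x z : mul (a *: x) z = a *: mul x z.
Proof. by case: Hb => H _ _ _; have := H a x 0 z; rewrite addr0 bmul0l addr0. Qed.
Lemma bmulZr a x z : mul z (a *: x) = a *: mul z x.
Proof. by case: Hb => _ H _ _; have := H a z x 0; rewrite addr0 bmul0r addr0. Qed.
Lemma bmul_suml (I : Type) (r : seq I) (P : pred I) (F : I -> V) z :
  mul (\sum_(i <- r | P i) F i) z = \sum_(i <- r | P i) mul (F i) z.
Proof. exact: (big_morph (fun x => mul x z) (fun x y => bmulDl x y z) (bmul0l z)). Qed.
Lemma bmul_sumr (I : Type) (r : seq I) (P : pred I) (F : I -> V) z :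
  mul z (\sum_(i <- r | P i) F i) = \sum_(i <- r | P i) mul z (F i).
Proof. exact: (big_morph (fun x => mul z x) (fun x y => bmulDr x y z) (bmul0r z)). Qed.

Definition isprod u := exists p q, u = mul p q.

Lemma assoc x u y : isprod u -> mul x (mul u y) = mul (mul x u) y.
Proof.
case=> p [q ->].
by rewrite rc lc [mul x (mul p q)]lc rc.
Qed.

Variable e : nat -> V.
Variable n : nat.
Notation N := (n + n)%N.

Definition op (k : 'I_N) (u : V) : V :=
  match split k with inl i => mul (e i) u | inr j => mul u (e j) end.

Lemma op_prod k u : isprod (op k u).
Proof. by rewrite /op; case: split => i; do 2 eexists. Qed.

Lemma op_comm k k' u : isprod u -> op k (op k' u) = op k' (op k u).
Proof.
move=> pu; rewrite /op; case: (split k) => i; case: (split k') => j.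
- exact: lc.
- by rewrite assoc.
- by rewrite assoc.
- exact: rc.
Qed.

Definition apply_ops (s : seq 'I_N) u := foldr op u s.

Lemma apply_prod s u : isprod u -> isprod (apply_ops s u).
Proof. by case: s => //= k s _; apply: op_prod. Qed.

Lemma op_apply k s u : isprod u -> op k (apply_ops s u) = apply_ops s (op k u).
Proof.
move=> pu; elim: s => //= k' s IH.
by rewrite op_comm ?IH //; apply: apply_prod.
Qed.

Lemma apply_cat s t u : apply_ops (s ++ t) u = apply_ops s (apply_ops t u).
Proof. by rewrite /apply_ops foldr_cat. Qed.

Lemma apply_rem k t u : isprod u -> k \in t ->
  apply_ops t u = op k (apply_ops (rem k t) u).
Proof.
move=> pu; elim: t => //= k' t IH; rewrite inE.
case: (eqVneq k' k) => [-> _ //|ne].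
move=> /= kt.
by rewrite IH // op_comm //; apply: apply_prod.
Qed.

Lemma apply_perm s t u : isprod u -> perm_eq s t -> apply_ops s u = apply_ops t u.
Proof.
move=> pu; elim: s t => [|k s IH] t pst.
  by move: pst; rewrite perm_sym => /perm_nilP ->.
have kt : k \in t by rewrite -(perm_mem pst) mem_head.
rewrite (apply_rem pu kt) /=; congr (op k _); apply: IH.
by rewrite -(perm_cons k) (permPl pst) perm_to_rem.
Qed.

Lemma pull_l k u v : isprod u -> mul (op k u) v = op k (mul u v).
Proof.
move=> pu; rewrite /op; case: split => i.
- by rewrite assoc.
- exact: rc.
Qed.

Lemma pull_r k u v : isprod v -> mul u (op k v) = op k (mul u v).
Proof.
move=> pv; rewrite /op; case: split => i.
- exact: lc.
- by rewrite assoc.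
Qed.

Lemma pull_apply_l s u v : isprod u -> mul (apply_ops s u) v = apply_ops s (mul u v).
Proof.
move=> pu; elim: s => //= k s IH.
by rewrite pull_l ?IH //; apply: apply_prod.
Qed.

Lemma pull_apply_r s u v : isprod v -> mul u (apply_ops s v) = apply_ops s (mul u v).
Proof.
move=> pv; elim: s => //= k s IH.
by rewrite pull_r ?IH //; apply: apply_prod.
Qed.

Definition la (i : 'I_n) : 'I_N := lshift n i.
Definition lb (j : 'I_n) : 'I_N := rshift n j.

Lemma opa i u : op (la i) u = mul (e i) u.
Proof. by rewrite /op /la -[lshift n i]/(unsplit (inl i : 'I_n + 'I_n)) unsplitK. Qed.
Lemma opb j u : op (lb j) u = mul u (e j).
Proof. by rewrite /op /lb -[rshift n j]/(unsplit (inr j : 'I_n + 'I_n)) unsplitK. Qed.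

Definition lst (m : 'X_{1..N}) : seq 'I_N :=
  flatten [seq nseq (m k) k | k <- enum 'I_N].

Lemma countL P m : count P (lst m) = (\sum_(k <- enum 'I_N) P k * m k)%N.
Proof.
rewrite /lst count_flatten sumnE big_map big_map; apply: eq_bigr => k _.
by rewrite count_nseq.
Qed.

Lemma lstD m1 m2 : perm_eq (lst (m1 + m2)%MM) (lst m1 ++ lst m2).
Proof.
apply/permP => P; rewrite count_cat !countL -big_split /=.
by apply: eq_bigr => k _; rewrite mnmDE mulnDr.
Qed.

Lemma lstU k : perm_eq (lst U_(k)%MM) [:: k].
Proof.
apply/permP => P; rewrite countL /= addn0.
rewrite (bigD1_seq k) ?mem_enum ?enum_uniq //= mnm1E eqxx muln1 big1 ?addn0 //.
by move=> k' /negbTE; rewrite mnm1E eq_sym => ->; rewrite muln0.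
Qed.

Lemma lstUD k m : perm_eq (lst (U_(k) + m)%MM) (k :: lst m).
Proof.
by rewrite (permPl (lstD _ _)) -cat1s perm_cat2r lstU.
Qed.

Definition W' (i j : 'I_n) (m : 'X_{1..N}) : V :=
  apply_ops (lst m) (mul (e i) (e j)).

Lemma core_prod i j : isprod (mul (e i) (e j)).
Proof. by do 2 eexists. Qed.

Lemma W'_opU i j k m : W' i j (U_(k) + m)%MM = op k (W' i j m).
Proof. by rewrite /W' (apply_perm _ (lstUD k m)) //; apply: core_prod. Qed.

Lemma W'_D i j m1 m2 : W' i j (m1 + m2)%MM = apply_ops (lst m1) (W' i j m2).
Proof. by rewrite /W' (apply_perm _ (lstD m1 m2)) ?apply_cat //; apply: core_prod. Qed.

Lemma LA i i' j r : W' i j (U_(la i') + r)%MM = W' i' j (U_(la i) + r)%MM.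
Proof.
rewrite /W' !(apply_perm _ (lstUD _ _)); try apply: core_prod.
rewrite /= !op_apply; try apply: core_prod.
by rewrite !opa lc.
Qed.

Lemma LB i j j' r : W' i j (U_(lb j') + r)%MM = W' i j' (U_(lb j) + r)%MM.
Proof.
rewrite /W' !(apply_perm _ (lstUD _ _)); try apply: core_prod.
rewrite /= !op_apply; try apply: core_prod.
by rewrite !opb rc.
Qed.

Lemma splitU (m : 'X_{1..N}) k : (0 < m k)%N -> m = (U_(k) + (m - U_(k)))%MM.
Proof.
move=> H; apply/mnmP => x; rewrite mnmDE mnmBE mnm1E.
case: eqP => [<-|_] /=; last by rewrite subn0.
by rewrite add1n subn1 prednK.
Qed.

Lemma coordE (m1 m2 : 'X_{1..N}) x : m1 = m2 -> m1 x = m2 x.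
Proof. by move=> ->. Qed.

Lemma step2 i j j' m1 m2 :
  (U_(lb j) + m1 = U_(lb j') + m2)%MM -> W' i j m1 = W' i j' m2.
Proof.
case: (eqVneq j j') => [<- /addmI -> //|ne H].
have pos : (0 < m1 (lb j'))%N.
  have := coordE (lb j') H; rewrite !mnmDE !mnm1E eqxx eq_rshift (negbTE ne).
  move=> /= E; lia.
set r := (m1 - U_(lb j'))%MM.
have Hm : m1 = (U_(lb j') + r)%MM by apply: splitU.
rewrite Hm LB; congr W'.
apply/mnmP => x; have := coordE x H; rewrite /r !mnmDE mnmBE !mnm1E.
have := pos; case: (eqVneq (lb j') x) => [<-|nx] /=; lia.
Qed.

Lemma Wcore i j i' j' m1 m2 :
  (U_(la i) + U_(lb j) + m1 = U_(la i') + U_(lb j') + m2)%MM ->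
  W' i j m1 = W' i' j' m2.
Proof.
case: (eqVneq i i') => [<- H|ne H].
  apply: step2; apply/mnmP => x; have := coordE x H; rewrite !mnmDE; lia.
have pos : (0 < m1 (la i'))%N.
  have := coordE (la i') H; rewrite !mnmDE !mnm1E eqxx eq_lshift (negbTE ne).
  rewrite eq_rlshift /=; lia.
set r := (m1 - U_(la i'))%MM.
have Hm : m1 = (U_(la i') + r)%MM by apply: splitU.
rewrite Hm LA; apply: step2.
apply/mnmP => x; have := coordE x H; rewrite /r !mnmDE mnmBE !mnm1E.
have := pos; case: (eqVneq (la i') x) => [<-|nx] /=; lia.
Qed.

Definition lemn (m1 m2 : 'X_{1..N}) := [forall k, (m1 k <= m2 k)%N].

Definition W (m : 'X_{1..N}) : V :=
  match [pick ij : 'I_n * 'I_n | lemn (U_(la ij.1) + U_(lb ij.2))%MM m] with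
  | Some ij => W' ij.1 ij.2 (m - (U_(la ij.1) + U_(lb ij.2)))%MM
  | None => 0
  end.

Lemma WE i j m : W (U_(la i) + U_(lb j) + m)%MM = W' i j m.
Proof.
rewrite /W; case: pickP => [[i' j'] /= Hle|H].
  apply: Wcore; apply/mnmP => x; rewrite !mnmDE mnmBE.
  move/forallP: Hle => /(_ x); rewrite !mnmDE; lia.
exfalso; have := H (i, j); rewrite /= => /negP; apply.
by apply/forallP => x; rewrite !mnmDE leq_addr.
Qed.

Lemma lst0 : lst 0%MM = [::].
Proof.
apply/perm_nilP/permP => P; rewrite countL /= big1 // => k _.
by rewrite mnm0E muln0.
Qed.

Lemma W'0 i j : W' i j 0%MM = mul (e i) (e j).
Proof. by rewrite /W' lst0. Qed.

Definition good (m : 'X_{1..N}) := exists i j m', m = (U_(la i) + U_(lb j) + m')%MM.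

Lemma coreW i j : W (U_(la i) + U_(lb j))%MM = mul (e i) (e j).
Proof. by rewrite -[(U_(la i) + U_(lb j))%MM]addm0 WE W'0. Qed.

Lemma leftW k m : good m -> W (U_(la k) + m)%MM = mul (e k) (W m).
Proof.
case=> i [j [m' ->]].
have -> : (U_(la k) + (U_(la i) + U_(lb j) + m'))%MM = (U_(la i) + U_(lb j) + (U_(la k) + m'))%MM.
  by apply/mnmP => x; rewrite !mnmDE; lia.
by rewrite !WE W'_opU opa.
Qed.

Lemma rightW k m : good m -> W (m + U_(lb k))%MM = mul (W m) (e k).
Proof.
case=> i [j [m' ->]].
have -> : (U_(la i) + U_(lb j) + m' + U_(lb k))%MM = (U_(la i) + U_(lb j) + (U_(lb k) + m'))%MM.
  by apply/mnmP => x; rewrite !mnmDE; lia.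
by rewrite !WE W'_opU opb.
Qed.

Lemma prodW m1 m2 : good m1 -> good m2 -> W (m1 + m2)%MM = mul (W m1) (W m2).
Proof.
case=> i1 [j1 [r1 ->]]; case=> i2 [j2 [r2 ->]].
have -> : (U_(la i1) + U_(lb j1) + r1 + (U_(la i2) + U_(lb j2) + r2))%MM =
  (U_(la i1) + U_(lb j1) + (r1 + (r2 + (U_(la i2) + (U_(lb j2) + 0)))))%MM.
  by apply/mnmP => x; rewrite !mnmDE mnm0E; lia.
rewrite !WE W'_D W'_D !W'_opU W'0 opa opb.
rewrite /W' pull_apply_l ?pull_apply_r; try apply: core_prod.
by rewrite lc.
Qed.

Definition L2 (P : {mpoly K[N]}) : V := \sum_(m <- msupp P) P@_m *: W m.

Lemma L2_seq P s : uniq s -> {subset msupp P <= s} ->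
  L2 P = \sum_(m <- s) P@_m *: W m.
Proof.
move=> us sub; rewrite (bigID (fun m => m \in msupp P)) /=.
rewrite [X in _ + X]big1 ?addr0; last first.
  by move=> m /memN_msupp_eq0 ->; rewrite scale0r.
rewrite -big_filter /L2; apply: perm_big.
apply: uniq_perm; rewrite ?msupp_uniq ?filter_uniq // => m.
rewrite mem_filter; apply/idP/andP => [H|[] //]; split => //; exact: sub.
Qed.

Lemma L2D P Q : L2 (P + Q) = L2 P + L2 Q.
Proof.
set s := undup (msupp P ++ msupp Q ++ msupp (P + Q)).
have us : uniq s by apply: undup_uniq.
have h1 : {subset msupp P <= s} by move=> m; rewrite mem_undup !mem_cat => ->.
have h2 : {subset msupp Q <= s} by move=> m; rewrite mem_undup !mem_cat => ->; rewrite orbT.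
have h3 : {subset msupp (P + Q) <= s} by move=> m; rewrite mem_undup !mem_cat => ->; rewrite !orbT.
rewrite (L2_seq us h1) (L2_seq us h2) (L2_seq us h3).
rewrite -big_split /=; apply: eq_bigr => m _; by rewrite mcoeffD scalerDl.
Qed.

Lemma L2Z c P : L2 (c *: P) = c *: L2 P.
Proof.
rewrite (@L2_seq _ (msupp P)) ?msupp_uniq //; last exact: msuppZ_le.
rewrite /L2 scaler_sumr; apply: eq_bigr => m _; by rewrite mcoeffZ scalerA.
Qed.

Lemma L20 : L2 0 = 0.
Proof. by rewrite -(scale0r (0 : {mpoly K[N]})) L2Z scale0r. Qed.

Lemma L2_sum (I : Type) (r : seq I) (F : I -> {mpoly K[N]}) :
  L2 (\sum_(i <- r) F i) = \sum_(i <- r) L2 (F i).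
Proof. exact: (big_morph L2 L2D L20). Qed.

Lemma L2X m : L2 'X_[m] = W m.
Proof. by rewrite /L2 msuppX big_seq1 mcoeffX eqxx scale1r. Qed.

Definition AG (P : {mpoly K[N]}) := forall m : 'X_{1..N}, [forall i : 'I_n, m (la i) == 0%N] -> P@_m = 0.
Definition BG (P : {mpoly K[N]}) := forall m : 'X_{1..N}, [forall j : 'I_n, m (lb j) == 0%N] -> P@_m = 0.

Lemma good_of P m : AG P -> BG P -> m \in msupp P -> good m.
Proof.
move=> ha hb; move=> Hm; have nz : P@_m != 0 by rewrite mcoeff_eq0 Hm.
have : ~~ [forall i : 'I_n, m (la i) == 0%N].
  by apply/negP => /ha E; rewrite E eqxx in nz.
have : ~~ [forall j : 'I_n, m (lb j) == 0%N].
  by apply/negP => /hb E; rewrite E eqxx in nz.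
rewrite !negb_forall => /existsP [j Hj] /existsP [i Hi].
exists i, j, (m - U_(la i) - U_(lb j))%MM.
apply/mnmP => x; rewrite !mnmDE !mnmBE !mnm1E.
move: Hi Hj; case: (eqVneq (la i) x) => [<-|nx].
  rewrite eq_rlshift /=; lia.
case: (eqVneq (lb j) x) => [<-|ny] /=; lia.
Qed.

Lemma mulE (P Q : {mpoly K[N]}) : P * Q =
  \sum_(m <- msupp P) \sum_(m' <- msupp Q) (P@_m * Q@_m') *: 'X_[m + m'].
Proof.
rewrite {1}[P]mpolyE {1}[Q]mpolyE mulr_suml; apply: eq_bigr => m _.
rewrite mulr_sumr; apply: eq_bigr => m' _.
by rewrite -scalerAl -scalerAr scalerA mpolyXD.
Qed.

Lemma L2M P Q : AG P -> BG P -> AG Q -> BG Q -> L2 (P * Q) = mul (L2 P) (L2 Q).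
Proof.
move=> aP bP aQ bQ.
rewrite mulE L2_sum [in RHS]/L2 bmul_suml big_seq [RHS]big_seq; apply: eq_bigr => m Hm.
rewrite L2_sum bmulZl bmul_sumr scaler_sumr big_seq [RHS]big_seq.
apply: eq_bigr => m' Hm'.
rewrite L2Z L2X bmulZr scalerA prodW //.
- exact: (good_of aP bP).
- exact: (good_of aQ bQ).
Qed.

Lemma L2_la k Q : AG Q -> BG Q -> L2 ('X_(la k) * Q) = mul (e k) (L2 Q).
Proof.
move=> aQ bQ.
rewrite {1}[Q]mpolyE mulr_sumr L2_sum [in RHS]/L2 bmul_sumr big_seq [RHS]big_seq.
apply: eq_bigr => m Hm.
by rewrite -scalerAr L2Z -mpolyXD L2X bmulZr leftW //; apply: (good_of aQ bQ).
Qed.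

Lemma L2_lb k P : AG P -> BG P -> L2 (P * 'X_(lb k)) = mul (L2 P) (e k).
Proof.
move=> aP bP.
rewrite {1}[P]mpolyE mulr_suml L2_sum [in RHS]/L2 bmul_suml big_seq [RHS]big_seq.
apply: eq_bigr => m Hm.
by rewrite -scalerAl L2Z -mpolyXD L2X bmulZl rightW //; apply: (good_of aP bP).
Qed.

Lemma L2_ab i j : L2 ('X_(la i) * 'X_(lb j)) = mul (e i) (e j).
Proof. by rewrite -mpolyXD L2X coreW. Qed.

Definition SA (l : 'I_n -> K) : {mpoly K[N]} := \sum_k l k *: 'X_(la k).
Definition SB (l : 'I_n -> K) : {mpoly K[N]} := \sum_k l k *: 'X_(lb k).
Definition SE (l : 'I_n -> K) : V := \sum_k l k *: e k.

Lemma L2_AQ l Q : AG Q -> BG Q -> L2 (SA l * Q) = mul (SE l) (L2 Q).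
Proof.
move=> aQ bQ; rewrite /SA /SE mulr_suml L2_sum bmul_suml; apply: eq_bigr => k _.
by rewrite -scalerAl L2Z L2_la // bmulZl.
Qed.

Lemma L2_PB l P : AG P -> BG P -> L2 (P * SB l) = mul (L2 P) (SE l).
Proof.
move=> aP bP; rewrite /SB /SE mulr_sumr L2_sum bmul_sumr; apply: eq_bigr => k _.
by rewrite -scalerAr L2Z L2_lb // bmulZr.
Qed.

Lemma L2_AB l l' : L2 (SA l * SB l') = mul (SE l) (SE l').
Proof.
rewrite /SA /SE mulr_suml L2_sum bmul_suml; apply: eq_bigr => k _.
rewrite /SB mulr_sumr L2_sum bmulZl bmul_sumr scaler_sumr; apply: eq_bigr => k' _.
by rewrite -scalerAl -scalerAr !L2Z L2_ab bmulZr scalerA.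
Qed.

Lemma AG0 : AG 0. Proof. by move=> m _; rewrite mcoeff0. Qed.
Lemma BG0 : BG 0. Proof. by move=> m _; rewrite mcoeff0. Qed.
Lemma AGD P Q : AG P -> AG Q -> AG (P + Q).
Proof. by move=> hP hQ m H; rewrite mcoeffD hP ?hQ ?addr0. Qed.
Lemma BGD P Q : BG P -> BG Q -> BG (P + Q).
Proof. by move=> hP hQ m H; rewrite mcoeffD hP ?hQ ?addr0. Qed.
Lemma AGZ c P : AG P -> AG (c *: P).
Proof. by move=> hP m H; rewrite mcoeffZ hP ?mulr0. Qed.
Lemma BGZ c P : BG P -> BG (c *: P).
Proof. by move=> hP m H; rewrite mcoeffZ hP ?mulr0. Qed.

Lemma AGM P Q : AG P -> AG (P * Q).
Proof.
move=> hP m H; rewrite mcoeffM big1 // => k /eqP Hk.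
have -> : P@_k.1 = 0.
  apply: hP; apply/forallP => i; move/forallP: H => /(_ i).
  have := coordE (la i) Hk; rewrite mnmDE => E' /eqP H0; by move: E'; rewrite H0 => /esym/eqP; rewrite addn_eq0 => /andP [].
by rewrite GRing.mul0r.
Qed.

Lemma BGM P Q : BG Q -> BG (P * Q).
Proof.
move=> hQ m H; rewrite mcoeffM big1 // => k /eqP Hk.
have -> : Q@_k.2 = 0.
  apply: hQ; apply/forallP => i; move/forallP: H => /(_ i).
  have := coordE (lb i) Hk; rewrite mnmDE => E' /eqP H0.
  by move: E'; rewrite H0 => /esym/eqP; rewrite addn_eq0 => /andP [].
by rewrite GRing.mulr0.
Qed.

Lemma AGA l : AG (SA l).
Proof.
rewrite /SA; elim/big_ind: _ => //; [exact: AG0 | exact: AGD | ].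
move=> k _; apply: AGZ => m /forallP /(_ k) /eqP H.
by rewrite mcoeffX; case: eqP => // E; rewrite -E mnm1E eqxx in H.
Qed.

Lemma BGB l : BG (SB l).
Proof.
rewrite /SB; elim/big_ind: _ => //; [exact: BG0 | exact: BGD | ].
move=> k _; apply: BGZ => m /forallP /(_ k) /eqP H.
by rewrite mcoeffX; case: eqP => // E; rewrite -E mnm1E eqxx in H.
Qed.

Fixpoint bnd (t : naterm K) : bool :=
  match t with
  | NVar i => (i < n)%N
  | NZero => true
  | NAdd a b => bnd a && bnd b
  | NScale _ a => bnd a
  | NMul a b => bnd a && bnd b
  end.

Definition Lp (X : ('I_n -> K) * {mpoly K[N]}) := SA X.1 + X.2.
Definition Rp (X : ('I_n -> K) * {mpoly K[N]}) := SB X.1 + X.2.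

Fixpoint nf (t : naterm K) : ('I_n -> K) * {mpoly K[N]} :=
  match t with
  | NVar i => (fun k : 'I_n => ((k : nat) == i)%:R, 0)
  | NZero => (fun _ => 0, 0)
  | NAdd a b => (fun k => (nf a).1 k + (nf b).1 k, (nf a).2 + (nf b).2)
  | NScale c a => (fun k => c * (nf a).1 k, c *: (nf a).2)
  | NMul a b => (fun _ => 0, Lp (nf a) * Rp (nf b))
  end.

Definition Lam (X : ('I_n -> K) * {mpoly K[N]}) : V := SE X.1 + L2 X.2.

Lemma nf_good t : AG (nf t).2 /\ BG (nf t).2.
Proof.
elim: t => [i||a [ha hb] b [ha' hb']|c a [ha hb]|a [ha hb] b [ha' hb']] /=.
- by split; [exact: AG0|exact: BG0].
- by split; [exact: AG0|exact: BG0].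
- by split; [exact: AGD|exact: BGD].
- by split; [exact: AGZ|exact: BGZ].
- split; first by apply: AGM; apply: AGD => //; apply: AGA.
  by apply: BGM; apply: BGD => //; apply: BGB.
Qed.

Lemma SE0 : SE (fun _ => 0) = 0.
Proof. by rewrite /SE big1 // => k _; rewrite scale0r. Qed.

Lemma nf_eval t : bnd t -> naeval mul e t = Lam (nf t).
Proof.
rewrite /Lam; elim: t => [i||a IHa b IHb|c a IHa|a IHa b IHb] /=.
- move=> Hi; rewrite L20 addr0 /SE (bigD1 (Ordinal Hi)) //= eqxx scale1r big1 ?addr0 //.
  move=> k Hk; have ne : (k : nat) != i.
    by apply: contra Hk => /eqP E; apply/eqP/val_inj.
  by rewrite (negbTE ne) scale0r.
- by rewrite SE0 L20 addr0.
- move=> /andP [ba bb]; rewrite IHa // IHb // L2D /SE.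
  rewrite addrACA -big_split /=; congr (_ + _); apply: eq_bigr => k _.
  by rewrite scalerDl.
- move=> ba; rewrite IHa // L2Z /SE scalerDr scaler_sumr; congr (_ + _).
  by apply: eq_bigr => k _; rewrite scalerA.
- move=> /andP [ba bb]; rewrite IHa // IHb // SE0 add0r.
  case: (nf_good a) => ha hb; case: (nf_good b) => ha' hb'.
  rewrite /Lp /Rp mulrDl !mulrDr !L2D L2_AB L2_AQ // L2_PB // L2M //.
  by rewrite bmulDl !bmulDr !addrA.
Qed.
End Alg.
Section V0.
Variable K : fieldType.
Local Notation V0 := (K^o * K^o * K^o)%type.
Definition mul0 (u v : V0) : V0 := (0, 0, (u.1.1 + u.2) * (v.1.2 + v.2)).

Lemma V0_bic : is_bicommutative_algebra mul0.
Proof.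
have sc : forall (b : K) (x : K^o), b *: x = b * x by [].
split.
- move=> a [[x1 x2] x3] [[y1 y2] y3] [[z1 z2] z3]; rewrite /mul0 /=.
  congr (_, _, _); rewrite /GRing.scale /=; rewrite ?sc; ring.
- move=> a [[x1 x2] x3] [[y1 y2] y3] [[z1 z2] z3]; rewrite /mul0 /=.
  congr (_, _, _); rewrite /GRing.scale /=; rewrite ?sc; ring.
- move=> [[x1 x2] x3] [[y1 y2] y3] [[z1 z2] z3]; rewrite /mul0 /=.
  congr (_, _, _); rewrite ?addr0 ?add0r; ring.
- move=> [[x1 x2] x3] [[y1 y2] y3] [[z1 z2] z3]; rewrite /mul0 /=.
  congr (_, _, _); rewrite ?addr0 ?add0r; ring.
Qed.

Variable n : nat.
Notation N := (n + n)%N.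

Definition pt (e' : nat -> V0) (x : 'I_N) : K :=
  match split x with
  | inl i => (e' i).1.1 + (e' i).2
  | inr j => (e' j).1.2 + (e' j).2
  end.

Lemma pt_la e' i : pt e' (la i) = (e' i).1.1 + (e' i).2.
Proof. by rewrite /pt /la -[lshift n i]/(unsplit (inl i : 'I_n + 'I_n)) unsplitK. Qed.
Lemma pt_lb e' j : pt e' (lb j) = (e' j).1.2 + (e' j).2.
Proof. by rewrite /pt /lb -[rshift n j]/(unsplit (inr j : 'I_n + 'I_n)) unsplitK. Qed.

Lemma sum_delta i (F : nat -> K) : (i < n)%N ->
  \sum_(k < n) ((k : nat) == i)%:R * F k = F i.
Proof.
move=> Hi; rewrite (bigD1 (Ordinal Hi)) //= eqxx mul1r big1 ?addr0 //.
move=> k Hk; have ne : (k : nat) != i.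
  by apply: contra Hk => /eqP E; apply/eqP/val_inj.
by rewrite (negbTE ne) mul0r.
Qed.

Lemma meval_SA e' l : (SA l).@[pt e'] = \sum_(k < n) l k * ((e' k).1.1 + (e' k).2).
Proof.
rewrite /SA rmorph_sum; apply: eq_bigr => k _.
transitivity (meval (pt e') (l k *: 'X_(la k))); first by [].
by rewrite mevalZ mevalXU pt_la.
Qed.

Lemma meval_SB e' l : (SB l).@[pt e'] = \sum_(k < n) l k * ((e' k).1.2 + (e' k).2).
Proof.
rewrite /SB rmorph_sum; apply: eq_bigr => k _.
transitivity (meval (pt e') (l k *: 'X_(lb k))); first by [].
by rewrite mevalZ mevalXU pt_lb.
Qed.

Lemma pairD (x1 x2 x3 y1 y2 y3 : K) :
  ((x1, x2, x3) : V0) + (y1, y2, y3) = (x1 + y1, x2 + y2, x3 + y3).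
Proof. by []. Qed.
Lemma pairZ (c x1 x2 x3 : K) :
  c *: ((x1, x2, x3) : V0) = (c * x1, c * x2, c * x3).
Proof. by []. Qed.

Lemma sum0 (F : 'I_n -> K) : \sum_(k < n) 0 * F k = 0.
Proof. by rewrite big1 // => k _; rewrite mul0r. Qed.

Lemma model_eval (e' : nat -> V0) t : bnd n t ->
  naeval mul0 e' t =
  (\sum_(k < n) (nf n t).1 k * (e' k).1.1,
   \sum_(k < n) (nf n t).1 k * (e' k).1.2,
   \sum_(k < n) (nf n t).1 k * (e' k).2 + (nf n t).2.@[pt e']).
Proof.
have sc : forall (b : K) (x : K^o), b *: x = b * x by [].
elim: t => [i||a IHa b IHb|c a IHa|a IHa b IHb] /=.
- move=> Hi; rewrite (sum_delta (fun k => (e' k).1.1)) // (sum_delta (fun k => (e' k).1.2)) // (sum_delta (fun k => (e' k).2)) // meval0 addr0.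
  by case: (e' i) => [[? ?] ?].
- rewrite !big1 ?meval0 ?addr0 // => k _; exact: mul0r.
- move=> /andP [ba bb]; rewrite IHa // IHb //= mevalD.
  rewrite pairD -!big_split /=; congr (_, _, _).
  + by apply: eq_bigr => k _; rewrite mulrDl.
  + by apply: eq_bigr => k _; rewrite mulrDl.
  + rewrite addrACA -big_split /=; congr (_ + _).
    by apply: eq_bigr => k _; rewrite mulrDl.
- move=> ba; rewrite IHa // pairZ mevalZ; congr (_, _, _).
  + by rewrite mulr_sumr; apply: eq_bigr => k _; rewrite mulrA.
  + by rewrite mulr_sumr; apply: eq_bigr => k _; rewrite mulrA.
  + rewrite mulrDr [c * \sum_(_ < _) _]mulr_sumr; congr (_ + _).
    by apply: eq_bigr => k _; rewrite mulrA.
- move=> /andP [ba bb]; rewrite !sum0 add0r IHa // IHb // /mul0 /=.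
  rewrite mevalM /Lp /Rp !mevalD meval_SA meval_SB.
  congr (_, _, _); congr (_ * _).
  + by rewrite addrA -big_split /=; congr (_ + _); apply: eq_bigr => k _; rewrite mulrDr.
  + by rewrite addrA -big_split /=; congr (_ + _); apply: eq_bigr => k _; rewrite mulrDr.
Qed.
End V0.

Lemma naeval_subst (K : fieldType) (V : lmodType K) (mul : V -> V -> V) e (g : nat -> naterm K) t :
  naeval mul e (nasubst g t) = naeval mul (fun i => naeval mul e (g i)) t.
Proof. by elim: t => [i||a IHa b IHb|c a IHa|a IHa b IHb] /=; rewrite ?IHa ?IHb. Qed.

Lemma naeval_ext (K : fieldType) (V : lmodType K) (mul : V -> V -> V) e1 e2 t :
  (forall i, e1 i = e2 i) -> naeval mul e1 t = naeval mul e2 t.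
Proof. by move=> H; elim: t => [i||a IHa b IHb|c a IHa|a IHa b IHb] /=; rewrite ?IHa ?IHb. Qed.

Fixpoint maxv (K : Type) (t : naterm K) : nat :=
  match t with
  | NVar i => i
  | NZero => 0
  | NAdd a b => maxn (maxv a) (maxv b)
  | NScale _ a => maxv a
  | NMul a b => maxn (maxv a) (maxv b)
  end.

Lemma bnd_mono (K : fieldType) m m' (t : naterm K) : (m <= m')%N -> bnd m t -> bnd m' t.
Proof.
move=> le; elim: t => [i||a IHa b IHb|c a IHa|a IHa b IHb] //=.
- by move=> Hi; exact: leq_trans Hi le.
- by move=> /andP [] /IHa -> /IHb ->.
- by move=> /andP [] /IHa -> /IHb ->.
Qed.

Lemma bnd_maxv (K : fieldType) (t : naterm K) : bnd (maxv t).+1 t.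
Proof.
elim: t => //= [a IHa b IHb|a IHa b IHb]; apply/andP; split;
  (apply: bnd_mono; last eassumption); by rewrite ltnS ?leq_maxl ?leq_maxr.
Qed.

Theorem corollary4p5 (K : fieldType) (hK : [pchar K]%R =i pred0) (f : naterm K) :
  identity_of_F1B f -> identity_of_B f.
Proof.
move=> H V mul Hm e.
pose n := (maxv f).+1.
have Hb : bnd n f := bnd_maxv f.
have sc : forall (b : K) (x : K^o), b *: x = b * x by [].
have Hmod : forall c k : nat -> K,
    naeval (mul0 (K:=K)) (fun i => ((c i, 2 * c i, 2 * k i) : (K^o * K^o * K^o)%type)) f = 0.
  move=> c k.
  pose g := fun i => NAdd (NScale (c i) (NVar 0)) (NScale (k i) (NMul (NVar 0) (NVar 0))) : naterm K.
  have Hg : forall i, is_one_var (g i) by [].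
  have := H g Hg _ _ (V0_bic K) (fun _ => ((1, 2, 0) : (K^o * K^o * K^o)%type)).
  rewrite naeval_subst => E; rewrite -E; apply: naeval_ext => i.
  rewrite /= /mul0 /= pairZ pairZ pairD; congr (_, _, _); ring.
have Hl : forall k : 'I_n, (nf n f).1 k = 0.
  move=> k; have := Hmod (fun i => (i == k)%:R) (fun _ => 0).
  rewrite (model_eval _ Hb) => /(congr1 (fun x => x.1.1)) /=.
  rewrite (bigD1 k) //= eqxx mulr1 big1 ?addr0 // => j Hj.
  have ne : (j : nat) != k by apply: contra Hj => /eqP E; apply/eqP/val_inj.
  by rewrite (negbTE ne) mulr0.
have two : (2%:R : K) != 0 by rewrite ((pcharf0P K).1 hK 2).
have HP : (nf n f).2 = 0.
  apply: (mpoly_vanish hK) => v.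
  pose c := fun i : nat => v (lb (inord i : 'I_n)) - v (la (inord i : 'I_n)).
  pose k := fun i : nat => (2 * v (la (inord i : 'I_n)) - v (lb (inord i : 'I_n))) / 2.
  have := Hmod c k; rewrite (model_eval _ Hb) => /(congr1 (fun x => x.2)) /=.
  rewrite big1 ?add0r; last by move=> j _; rewrite Hl mul0r.
  move=> E; rewrite -E; apply: meval_eq => x.
  rewrite /pt; case: splitP => j Hj.
    have -> : x = la j by apply/val_inj; rewrite /= Hj.
    rewrite /c /k inord_val; rewrite /=; field; exact: two.
  have -> : x = lb j by apply/val_inj; rewrite /= Hj.
  rewrite /c /k inord_val; rewrite /=; field; exact: two.
rewrite (nf_eval Hm e Hb) /Lam HP L20 addr0 /SE big1 // => j _.
by rewrite Hl scale0r.
Qed.
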